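(* Let $n$ and $r$ be integers such that $r\geq 3$ and $n\geq r(r-1)\big((r-1)(r-2)+1\big)$. If $(r^2-r)$ divides $n$ and an affine plane of order $r$ exists, then there exists a graph $G$ on $n$ vertices with $$\delta(G) = \left(1-\frac{r-2}{r^2-r}\right)n-2$$ such that $\mathrm{mc}_r(G)< \frac{n}{r-1}$.
   Context: An affine plane of order $q$ is a $q$-uniform hypergraph on $q^2$ vertices (points) with $q(q+1)$ edges (lines) such that each pair of distinct points lies in exactly one line. $\delta(G)$ denotes the minimum degree of $G$. An $r$-coloring of $G$ means a coloring of the edges of $G$ with $r$ colors. For a graph $G$ and a positive integer $r$, $\mathrm{mc}_r(G)$ is the largest integer $m$ such that in every $r$-coloring of the edges of $G$ there is a monochromatic component (a maximal connected subgraph all of whose edges have one color) with at least $m$ vertices. *)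

(* Defs.v *)
From mathcomp Require Import all_boot all_order all_algebra.
Set Implicit Arguments. Unset Strict Implicit. Unset Printing Implicit Defensive.

Definition simple_graph (n : nat) (G : rel 'I_n) : Prop :=
  symmetric G /\ irreflexive G.

(* degree of v and minimum degree delta(G) (n is the default for n = 0,
   irrelevant for our use since n > 0) *)
Definition degree (n : nat) (G : rel 'I_n) (v : 'I_n) : nat := #|[set u | G v u]|.
Definition min_degree (n : nat) (G : rel 'I_n) : nat :=
  \big[minn/n]_(v : 'I_n) degree G v.

(* An r-coloring of the edges: a colour for each ordered pair, required to be
   symmetric on edges (so it is really a colouring of the undirected edges;
   values on non-edges are irrelevant). *)
Definition coloring (n r : nat) := {ffun 'I_n * 'I_n -> 'I_r}.
Definition is_edge_coloring (n r : nat) (G : rel 'I_n) (c : coloring n r) : bool :=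
  [forall x, forall y, G x y ==> (c (x, y) == c (y, x))].

Definition color_rel (n r : nat) (G : rel 'I_n) (c : coloring n r) (i : 'I_r) : rel 'I_n :=
  fun x y => G x y && (c (x, y) == i).

Definition mono_comp (n r : nat) (G : rel 'I_n) (c : coloring n r) (i : 'I_r) (v : 'I_n)
  : {set 'I_n} := [set u | connect (color_rel G c i) v u].

Definition mc_prop (n r : nat) (G : rel 'I_n) (m : nat) : bool :=
  [forall c : coloring n r, is_edge_coloring G c ==>
     [exists i : 'I_r, exists v : 'I_n, m <= #|mono_comp G c i v|]].

Definition mc (r n : nat) (G : rel 'I_n) : nat :=
  \max_(m < n.+1 | mc_prop r G m) m.

Definition affine_plane (q : nat) (L : {set {set 'I_(q ^ 2)}}) : Prop :=
  [/\ #|L| = q * (q + 1),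
      forall l, l \in L -> #|l| = q
    & forall x y : 'I_(q ^ 2), x != y ->
        #|[set l in L | (x \in l) && (y \in l)]| = 1].

Definition affine_plane_exists (q : nat) : Prop :=
  exists L : {set {set 'I_(q ^ 2)}}, affine_plane L.

(* Main.v *)
Require Import Defs.
From mathcomp Require Import all_boot all_order all_algebra.
From mathcomp Require Import zify ring.
Set Implicit Arguments. Unset Strict Implicit. Unset Printing Implicit Defensive.

Lemma sum_boolE (T : finType) (S : {pred T}) (b : pred T) :
  \sum_(p in S) (b p : nat) = #|[set p in S | b p]|.
Proof.
rewrite -sum1_card big_mkcond [RHS]big_mkcond /=; apply: eq_bigr => p _.
by rewrite !inE; case: (p \in S); case: (b p).
Qed.

Section Geo.
Variable r : nat.
Hypothesis hr : 2 <= r.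
Local Notation P := 'I_(r ^ 2).
Variable L : {set {set P}}.
Hypothesis Hsz : forall l, l \in L -> #|l| = r.
Hypothesis Hpair : forall x y : P, x != y ->
        #|[set l in L | (x \in l) && (y \in l)]| = 1.

Lemma line_uniq x y l1 l2 : x != y -> l1 \in L -> l2 \in L ->
  x \in l1 -> y \in l1 -> x \in l2 -> y \in l2 -> l1 = l2.
Proof.
move=> xy L1 L2 x1 y1 x2 y2; have /eqP/cards1P [l0 e] := Hpair xy.
have : l1 \in [set l in L | (x \in l) && (y \in l)] by rewrite !inE L1 x1 y1.
have : l2 \in [set l in L | (x \in l) && (y \in l)] by rewrite !inE L2 x2 y2.
by rewrite e !inE => /eqP -> /eqP ->.
Qed.

Lemma inter1 l m x y : l \in L -> m \in L -> l != m ->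
  x \in l -> x \in m -> y \in l -> y \in m -> x = y.
Proof.
move=> Ll Lm lm xl xm yl ym; apply/eqP; apply/negPn/negP => xy.
by move/eqP: lm; apply; apply: (line_uniq xy).
Qed.

Definition lineof (x y : P) : {set P} :=
  if [pick l in L | (x \in l) && (y \in l)] is Some l then l else set0.

Lemma lineofP x y : x != y -> [/\ lineof x y \in L, x \in lineof x y & y \in lineof x y].
Proof.
move=> xy; rewrite /lineof; case: pickP => [l /andP [-> /andP [-> ->]] //|].
move=> H; have := Hpair xy; move/eqP; rewrite eq_sym; move/eqP.
have -> : [set l in L | (x \in l) && (y \in l)] = set0.
  by apply/setP => l; rewrite !inE; apply: H.
by rewrite cards0.
Qed.

Lemma lineofC x y : x != y -> lineof x y = lineof y x.
Proof.
move=> xy; have [a b c] := lineofP xy; rewrite eq_sym in xy.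
have [a' b' c'] := lineofP xy; rewrite eq_sym in xy.
exact: (line_uniq xy).
Qed.

Lemma line_ex (x : P) : exists2 l, l \in L & x \in l.
Proof.
have : 1 < #|P| by rewrite card_ord; apply: (@leq_trans (2 ^ 2)) => //; rewrite leq_exp2r.
case/card_gt1P => a [b [_ _ ab]].
have [y xy] : exists y, x != y.
  case: (eqVneq x a) => [xa|]; last by exists a.
  by exists b; rewrite xa.
by have [? ? ?] := lineofP xy; exists (lineof x y).
Qed.

Lemma lines_through_card x : #|[set l in L | x \in l]| = r.+1.
Proof.
set S := [set l in L | x \in l].
have E : \sum_(l in S) #|l :\ x| = \sum_(y : P) (y != x).
  transitivity (\sum_(l in S) \sum_(y : P) (y \in l :\ x)).
    by apply: eq_bigr => l _; rewrite -sum1_card big_mkcond /=; apply: eq_bigr => y _; case: (y \in _).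
  rewrite exchange_big /=; apply: eq_bigr => y _.
  rewrite sum_boolE; case: (eqVneq y x) => [->|yx] /=.
    apply/eqP; rewrite cards_eq0; apply/eqP/setP => l; rewrite !inE eqxx /=.
    by rewrite !andbF.
  transitivity #|[set l in L | (y \in l) && (x \in l)]|; last by rewrite Hpair.
  apply: eq_card => l; rewrite !inE yx /=.
  by case: (l \in L); case: (x \in l); case: (y \in l).
have E2 : \sum_(l in S) #|l :\ x| = #|S| * (r - 1).
  rewrite -sum_nat_const; apply: eq_bigr => l; rewrite inE => /andP [Ll xl].
  by have := cardsD1 x l; rewrite xl Hsz //; lia.
have E3 : \sum_(y : P) (y != x) = r ^ 2 - 1.
  rewrite sum_boolE; have -> : [set p in P | p != x] = [set~ x].
    by apply/setP => y; rewrite !inE.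
  by rewrite cardsC1 card_ord subn1.
move: E; rewrite E2 E3 => E.
have : #|S| * (r - 1) = r.+1 * (r - 1).
  rewrite E (_ : r ^ 2 = r * r); last by rewrite expnS expn1.
  nia.
move/eqP; rewrite eqn_pmul2r; first by move/eqP.
lia.
Qed.

Definition para (l m : {set P}) := (l == m) || [disjoint l & m].

Lemma para_refl l : para l l. Proof. by rewrite /para eqxx. Qed.
Lemma para_sym l m : para l m = para m l.
Proof. by rewrite /para eq_sym disjoint_sym. Qed.

Lemma para_meet l m x : para l m -> x \in l -> x \in m -> l = m.
Proof.
case/orP => [/eqP //|/disjointFr H] xl xm.
by have := H _ xl; rewrite xm.
Qed.

Lemma nonpara_meet l m : ~~ para l m -> exists x, (x \in l) && (x \in m).
Proof.
rewrite /para negb_or => /andP [_ /pred0Pn [x H]].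
by exists x.
Qed.

Lemma playfair x l : l \in L -> x \notin l ->
  #|[set m in L | (x \in m) && [disjoint m & l]]| = 1.
Proof.
move=> Ll xl.
set S := [set m in L | x \in m].
have Meet : [set m in S | ~~ [disjoint m & l]] = lineof x @: l.
  apply/setP => m; rewrite !inE; apply/idP/idP.
    case/andP => /andP [Lm xm] /pred0Pn [y /= /andP [ym yl]].
    have xy : x != y by apply/eqP => e; move: xl; rewrite e yl.
    have [a b c] := lineofP xy.
    have -> : m = lineof x y by apply: (line_uniq xy).
    by apply: imset_f.
  case/imsetP => y yl ->.
  have xy : x != y by apply/eqP => e; move: xl; rewrite e yl.
  have [a b c] := lineofP xy; rewrite a b /=.
  by apply/pred0Pn; exists y; rewrite /= c yl.
have cM : #|[set m in S | ~~ [disjoint m & l]]| = r.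
  rewrite Meet card_in_imset ?Hsz //.
  move=> y z yl zl e.
  have xy : x != y by apply/eqP => e'; move: xl; rewrite e' yl.
  have xz : x != z by apply/eqP => e'; move: xl; rewrite e' zl.
  have [a b c] := lineofP xy; have [a' b' c'] := lineofP xz.
  case: (eqVneq y z) => // yz.
  have : lineof x y = l by apply: (line_uniq yz) => //; rewrite e.
  by move=> ey; move: xl; rewrite -ey b.
have := cardsID [set m in S | ~~ [disjoint m & l]] S.
rewrite lines_through_card.
have -> : S :&: [set m in S | ~~ [disjoint m & l]] = [set m in S | ~~ [disjoint m & l]].
  by apply/setP => m; rewrite !inE; case: (m \in L); case: (x \in m).
rewrite cM.
have -> : S :\: [set m in S | ~~ [disjoint m & l]] = [set m in L | (x \in m) && [disjoint m & l]].
  apply/setP => m; rewrite !inE.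
  by case: (m \in L); case: (x \in m); case: [disjoint m & l].
lia.
Qed.

Definition par (x : P) (l : {set P}) : {set P} :=
  if [pick m in L | (x \in m) && para m l] is Some m then m else l.

Lemma par_spec x l : l \in L -> [/\ par x l \in L, x \in par x l & para (par x l) l].
Proof.
move=> Ll; rewrite /par; case: pickP => [m /andP [-> /andP [-> ->]] //|H].
exfalso; case: (boolP (x \in l)) => xl.
  by have := H l; rewrite /= Ll xl para_refl.
have := playfair Ll xl; move/eqP; rewrite eq_sym; move/eqP.
have -> : [set m in L | (x \in m) && [disjoint m & l]] = set0.
  apply/setP => m; rewrite !inE; have := H m; rewrite /= /para.
  by case: (m \in L); case: (x \in m); case: (m == l); case: [disjoint m & l].
by rewrite cards0.
Qed.

Lemma par_uniq x l m : l \in L -> m \in L -> x \in m -> para m l -> m = par x l.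
Proof.
move=> Ll Lm xm ml; have [a b c] := par_spec x Ll.
case: (boolP (x \in l)) => xl.
  by rewrite (para_meet ml xm xl) (para_meet c b xl).
have /eqP/cards1P [m0 e] := playfair Ll xl.
have h1 : m \in [set m in L | (x \in m) && [disjoint m & l]].
  rewrite !inE Lm xm /=; case/orP: ml => // /eqP e'; by move: xl; rewrite -e' xm.
have h2 : par x l \in [set m in L | (x \in m) && [disjoint m & l]].
  rewrite !inE a b /=; case/orP: c => // /eqP e'; by move: xl; rewrite -e' b.
by move: h1 h2; rewrite e !inE => /eqP -> /eqP ->.
Qed.

Lemma par_on x l : l \in L -> x \in l -> par x l = l.
Proof. by move=> Ll xl; symmetry; apply: par_uniq => //; apply: para_refl. Qed.

Lemma para_trans l m n : l \in L -> m \in L -> n \in L ->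
  para l m -> para m n -> para l n.
Proof.
move=> Ll Lm Ln lm mn; rewrite /para; case: (eqVneq l n) => //= ln.
apply/pred0Pn => -[x /andP [xl xn]]; move/eqP: ln; apply.
case: (boolP (x \in m)) => xm.
  by rewrite (para_meet lm xl xm) (para_meet mn xm xn).
by rewrite (par_uniq Lm Ll xl lm) (par_uniq Lm Ln xn); rewrite // para_sym.
Qed.

End Geo.


Lemma count_sumE (T : Type) (P : pred T) (s : seq T) : count P s = \sum_(x <- s) P x.
Proof. by elim: s => [|x s IH]; rewrite ?big_nil ?big_cons //= IH. Qed.

Lemma sum_boolT (T : finType) (b : pred T) :
  \sum_(p : T) (b p : nat) = #|[set p | b p]|.
Proof.
rewrite -sum1_card [RHS]big_mkcond /=; apply: eq_bigr => p _.
by rewrite !inE; case: (b p).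
Qed.

Lemma fiber_ex (T : finType) (x0 : T) (w : T -> nat) n : \sum_p w p = n ->
  exists f : 'I_n -> T, forall S : {set T}, #|[set v | f v \in S]| = \sum_(p in S) w p.
Proof.
move=> Hn.
set s := flatten [seq nseq (w p) p | p <- enum T].
have cS (S : {set T}) : count (mem S) s = \sum_(p in S) w p.
  rewrite /s count_flatten -map_comp sumnE big_map.
  rewrite (eq_bigr (fun p => (p \in S) * w p)); last by move=> p _; rewrite /= count_nseq.
  rewrite big_enum /= [RHS]big_mkcond /=; apply: eq_big => // p _.
  by case: (p \in S); rewrite ?mul1n ?mul0n.
have Hs : size s = n.
  rewrite -Hn (eq_bigl (mem setT)); last by move=> p; exact: esym (in_setT p).
  by rewrite -(cS setT) -count_predT; apply: eq_count => p; rewrite /= inE.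
case: n / Hs {Hn}.
exists (fun v => nth x0 s v) => S.
rewrite -cS count_sumE (big_nth x0) big_mkord.
by rewrite (sum_boolT (fun i : 'I_(size s) => nth x0 s i \in S)).
Qed.


Lemma ar1 r k c : r <= k -> true + c = r -> c * (k + 1) <= r * k - 1.
Proof. move=> h1 h2. nia. Qed.
Lemma ar2 r k s pos neg : s + neg = r * k + pos -> pos < neg -> s <= r * k - 1.
Proof. lia. Qed.
Lemma ar3 r a b : r = true + a -> a = true + b -> b = r - 2.
Proof. lia. Qed.
Lemma ar4 r k c : 3 <= r -> c = r - 3 -> k + 1 + c * k = (r - 2) * k + 1.
Proof. move=> h ->; nia. Qed.
Lemma ar5 r a b c : r = true + a -> a = true + b -> b = true + c -> c = r - 3.
Proof. lia. Qed.

Lemma ar6 r k s c1 c2 c3 : 3 <= r ->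
  s + c3 = k * c1 + c2 -> c1 = r ^ 2 - r -> c2 = r -> c3 = r -> s = r * (r - 1) * k.
Proof.
move=> h e e1 e2 e3; subst c1 c2 c3; move: e; rewrite (_ : r ^ 2 = r * r); last by rewrite expnS expn1.
nia.
Qed.
Lemma ar7 (r a : nat) : r = true + a -> true + a = r. Proof. by move=> ->. Qed.

Lemma ar9 r : 3 <= r -> 1 + (1 + (r - 2)) = r. Proof. lia. Qed.

Lemma ar10 n a s : s <= a + 1 -> n - (a + 2) <= n - 1 - s.
Proof. lia. Qed.
Lemma ar11 n a : n - 1 - (a + 1) = n - (a + 2).
Proof. lia. Qed.
Lemma ar12 r k : 3 <= r -> r <= k -> 0 < k - 1.
Proof. lia. Qed.
Lemma ar13 r a : r.+1 = true + a -> a <= r.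
Proof. lia. Qed.

Lemma bigmin_le (I : finType) (F : I -> nat) d i : \big[minn/d]_(j : I) F j <= F i.
Proof.
have : i \in index_enum I by rewrite mem_index_enum.
elim: (index_enum I) => [//|x s IH]; rewrite inE big_cons => /orP [/eqP <-|/IH h].
  exact: geq_minl.
exact: leq_trans (geq_minr _ _) h.
Qed.

Lemma inj_ex (T : finType) (S : {set T}) m : #|S| <= m -> 0 < m ->
  exists g : T -> 'I_m, {in S &, injective g}.
Proof.
move=> hS hm; exists (fun x => insubd (Ordinal hm) (index x (enum S))).
move=> x y xS yS /(congr1 val); rewrite !val_insubd.
have ix : index x (enum S) < m by rewrite (leq_trans _ hS) // cardE index_mem mem_enum.
have iy : index y (enum S) < m by rewrite (leq_trans _ hS) // cardE index_mem mem_enum.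
rewrite ix iy => e.
by rewrite -(nth_index x (_ : x \in enum S)) ?mem_enum // e nth_index ?mem_enum.
Qed.


Section Constr.
Variable r : nat.
Hypothesis hr3 : 3 <= r.
Local Notation P := 'I_(r ^ 2).
Variable L : {set {set P}}.
Hypothesis Hsz : forall l, l \in L -> #|l| = r.
Hypothesis Hpair : forall x y : P, x != y ->
        #|[set l in L | (x \in l) && (y \in l)]| = 1.
Variable k : nat.
Hypothesis hk : r <= k.

Let hr : 2 <= r. Proof. exact: ltnW. Qed.
Local Notation par := (par L).
Local Notation para := (@para r).
Let parS x l := @par_spec r hr L Hsz Hpair x l.
Let parU x l m := @par_uniq r hr L Hsz Hpair x l m.
Let ptrans l m n := @para_trans r hr L Hsz Hpair l m n.
Let I1 l m x y := @inter1 r L Hpair l m x y.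
Let LU x y l1 l2 := @line_uniq r L Hpair x y l1 l2.

Variables (ys : P) (A V Yb : {set P}).
Hypotheses (hA : A \in L) (hV : V \in L) (hY : Yb \in L).
Hypotheses (yA : ys \in A) (yV : ys \in V) (yY : ys \in Yb).
Hypotheses (AV : A != V) (AY : A != Yb) (VY : V != Yb).
Variable zs : P.
Hypotheses (zV : zs \in V) (zy : zs != ys).
Variable p1 : P.
Hypotheses (p1Y : p1 \in Yb) (p1y : p1 != ys) (p1m : p1 \notin par zs A).
Variable p0 : P.
Hypotheses (p0V : p0 \in V) (p0M : p0 \in par p1 A).

Lemma nonpara_share (l m : {set P}) (x : P) : l != m -> x \in l -> x \in m -> ~~ para l m.
Proof. by move=> lm xl xm; apply/negP => H; move/eqP: lm; apply; apply: (para_meet H xl xm). Qed.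

Let nAV : ~~ para A V. Proof. exact: nonpara_share AV yA yV. Qed.
Let nAY : ~~ para A Yb. Proof. exact: nonpara_share AY yA yY. Qed.
Let nVY : ~~ para V Yb. Proof. exact: nonpara_share VY yV yY. Qed.
Let AV1 x : x \in A -> x \in V -> x = ys.
Proof. by move=> a b; apply: (I1 hA hV AV a b yA yV). Qed.
Let AY1 x : x \in A -> x \in Yb -> x = ys.
Proof. by move=> a b; apply: (I1 hA hY AY a b yA yY). Qed.
Let VY1 x : x \in V -> x \in Yb -> x = ys.
Proof. by move=> a b; apply: (I1 hV hY VY a b yV yY). Qed.
Let zA : zs \notin A.
Proof. by apply/negP => h; move/eqP: zy; apply; apply: AV1. Qed.

Local Notation ms := (par zs A).
Let msL : ms \in L. Proof. by case: (parS zs hA). Qed.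
Let zms : zs \in ms. Proof. by case: (parS zs hA). Qed.
Let msA : para ms A. Proof. by case: (parS zs hA). Qed.
Let ms_dA x : x \in ms -> x \notin A.
Proof. by move=> xm; apply/negP => xa; move: zA; rewrite -(para_meet msA xm xa) zms. Qed.
Let yms : ys \notin ms.
Proof. by apply/negP => h; move: (ms_dA h); rewrite yA. Qed.

Local Notation B := (par zs Yb).
Let BL : B \in L. Proof. by case: (parS zs hY). Qed.
Let zB : zs \in B. Proof. by case: (parS zs hY). Qed.
Let BY : para B Yb. Proof. by case: (parS zs hY). Qed.
Let yB : ys \notin B.
Proof.
apply/negP => h; have e := para_meet BY h yY.
by move/eqP: zy; apply; apply: VY1 => //; rewrite -e.
Qed.
Let nBA : ~~ para B A.
Proof.
apply/negP => h; move/negP: nAY; apply.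
by apply: (ptrans hA BL hY) => //; rewrite para_sym.
Qed.
Let nBV : ~~ para B V.
Proof.
apply/negP => h; move/negP: nVY; apply.
by apply: (ptrans hV BL hY) => //; rewrite para_sym.
Qed.
Let BV1 x : x \in B -> x \in V -> x = zs.
Proof.
move=> a b; apply: (I1 BL hV _ a b zB zV).
by apply/eqP => e; move: nBV; rewrite e para_refl.
Qed.
Let Bms1 x : x \in B -> x \in ms -> x = zs.
Proof.
move=> a b; apply: (I1 BL msL _ a b zB zms).
by apply/eqP => e; move: nBA; rewrite e msA.
Qed.
Let Vms1 x : x \in V -> x \in ms -> x = zs.
Proof.
move=> a b; apply: (I1 hV msL _ a b zV zms).
by apply/eqP => e; move: nAV; rewrite e para_sym msA.
Qed.
Let p1B : p1 \notin B.
Proof.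
apply/negP => h; have e := para_meet BY h p1Y.
by move: yB; rewrite e yY.
Qed.
Let p1V : p1 \notin V.
Proof. by apply/negP => h; move/eqP: p1y; apply; apply: VY1. Qed.
Let p1A : p1 \notin A.
Proof. by apply/negP => h; move/eqP: p1y; apply; apply: AY1. Qed.

Local Notation M1 := (par p1 A).
Let M1L : M1 \in L. Proof. by case: (parS p1 hA). Qed.
Let p1M : p1 \in M1. Proof. by case: (parS p1 hA). Qed.
Let M1A : para M1 A. Proof. by case: (parS p1 hA). Qed.
Let M1_dA x : x \in M1 -> x \notin A.
Proof. by move=> xm; apply/negP => xa; move: p1A; rewrite -(para_meet M1A xm xa) p1M. Qed.
Let M1_dms x : x \in M1 -> x \notin ms.
Proof.
move=> xm; apply/negP => xa.
have h : para M1 ms by apply: (ptrans M1L hA msL) => //; rewrite para_sym.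
by move: p1m; rewrite -(para_meet h xm xa) p1M.
Qed.
Let p0y : p0 != ys.
Proof. by apply/eqP => e; move: (M1_dA p0M); rewrite e yA. Qed.
Let p0z : p0 != zs.
Proof. by apply/eqP => e; move: (M1_dms p0M); rewrite e zms. Qed.
Let p0ms : p0 \notin ms. Proof. exact: M1_dms. Qed.
Let p0A : p0 \notin A. Proof. exact: M1_dA. Qed.
Let p0B : p0 \notin B.
Proof. by apply/negP => h; move/eqP: p0z; apply; apply: BV1. Qed.
Let p0p1 : p0 != p1.
Proof. by apply/eqP => e; move: p1V; rewrite -e p0V. Qed.
Let M1_eq l : l \in L -> p0 \in l -> para l A -> l = M1.
Proof. by move=> Ll p0l lA; rewrite (parU hA Ll p0l lA) (parU hA M1L p0M M1A). Qed.

Let exA : exists a, (a \in A) && (a != ys).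
Proof.
have : 0 < #|A :\ ys|.
  have h2 : 2 < #|A| by rewrite (Hsz hA).
  by move: h2; rewrite (cardsD1 ys A) yA; case: #|A :\ ys|.
by case/card_gt0P => a; rewrite !inE => /andP [h1 h2]; exists a; rewrite h1 h2.
Qed.

Definition Zp p := ((p \in A) && (p != ys)) || (p == zs).
Definition posp p := (p \in ms) || (p == p0).
Definition negp p := [|| p \in B, p == ys | p == p1].
Definition w p : nat := if Zp p then 0 else (k + posp p) - negp p.

Lemma w_le p : w p <= k + (posp p && ~~ Zp p).
Proof. by rewrite /w; case: (Zp p) => //=; rewrite andbT leq_subr. Qed.

Lemma w_eq p : ~~ Zp p -> w p + negp p = k + posp p.
Proof.
rewrite /w => /negbTE ->; have : 0 < k by apply: leq_trans hk; apply: leq_trans hr3.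
by case: (posp p); case: (negp p) => //=; rewrite ?addn0 ?addn1 ?subn1 ?subn0 //; case: k.
Qed.

Lemma W1 l : l \in L -> \sum_(p in l) w p <= r * k - 1.
Proof.
move=> Ll.
case: (boolP [exists p in l, Zp p]) => [/existsP [z /andP [zl Zz]] | noZ].
  rewrite (bigD1 z) //= {1}/w Zz add0n.
  apply: (@leq_trans (\sum_(p in l :\ z) (k + 1))).
    rewrite [X in X <= _](eq_bigl (fun p => p \in l :\ z)); last by move=> p; rewrite !inE andbC.
    apply: leq_sum => p _; apply: leq_trans (w_le p) _; rewrite leq_add2l; by case: (_ && _).
  rewrite sum_nat_const; apply: ar1 hk _.
  by have := cardsD1 z l; rewrite zl (Hsz Ll) => h; exact: esym h.
have noZ' : forall p, p \in l -> ~~ Zp p.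
  by move=> p pl; apply/negP => Zz; move/negP: noZ; apply; apply/existsP; exists p; rewrite pl Zz.
have key : \sum_(p in l) w p + #|[set p in l | negp p]| = r * k + #|[set p in l | posp p]|.
  rewrite -!sum_boolE -big_split /=.
  transitivity (\sum_(p in l) (k + posp p)).
    by apply: eq_bigr => p pl; apply: w_eq; apply: noZ'.
  by rewrite big_split /= sum_nat_const (Hsz Ll) mulnC.
apply: (ar2 key).
case: (boolP (para l A)) => lA.
  have lnA x : x \in l -> x \notin A.
    move=> xl; apply/negP => xa; have e := para_meet lA xl xa.
    case: exA => a /andP [aA ay]; have := noZ' a; rewrite e => /(_ aA).
    by rewrite /Zp aA ay.
  have lms x : x \in l -> x \notin ms.
    move=> xl; apply/negP => xm.
    have h : para l ms by apply: (ptrans Ll hA msL) => //; rewrite para_sym.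
    have e := para_meet h xl xm.
    by have := noZ' zs; rewrite e => /(_ zms); rewrite /Zp eqxx orbT.
  have [b /andP [bl bB]] : exists b, (b \in l) && (b \in B).
    apply: nonpara_meet; apply/negP => h; move/negP: nBA; apply.
    by apply: (ptrans BL Ll hA) => //; rewrite para_sym.
  case: (boolP (p0 \in l)) => p0l.
    have e := M1_eq Ll p0l lA.
    apply: (@leq_trans 2).
      rewrite ltnS; apply: (@leq_trans #|[set p0]|); last by rewrite cards1.
      apply: subset_leq_card; apply/subsetP => p; rewrite !inE /posp => /andP [pl /orP [pm|->//]].
      by move: (lms p pl); rewrite pm.
    have bp1 : b != p1 by apply/eqP => e'; move: p1B; rewrite -e' bB.
    apply: (@leq_trans #|[set b; p1]|); first by rewrite cards2 bp1.
    apply: subset_leq_card; apply/subsetP => p; rewrite !inE => /orP [/eqP -> | /eqP ->]; rewrite /negp.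
      by rewrite bl bB.
    by rewrite e p1M eqxx !orbT.
  have -> : [set p in l | posp p] = set0.
    apply/setP => p; rewrite !inE /posp; apply/negP => /andP [pl /orP [pm | /eqP e]].
      by move: (lms p pl); rewrite pm.
    by move: p0l; rewrite -e pl.
  by rewrite cards0; apply/card_gt0P; exists b; rewrite !inE bl /negp bB.
have [a /andP [al aA]] := nonpara_meet lA.
have ay : a = ys.
  by apply/eqP; apply/negPn/negP => ay; have := noZ' a al; rewrite /Zp aA ay.
rewrite ay in al.
have p0l : p0 \notin l.
  apply/negP => p0l; have e : l = V by apply: (LU p0y Ll hV p0l al p0V yV).
  by have := noZ' zs; rewrite e => /(_ zV); rewrite /Zp eqxx orbT.
have lms : l != ms by apply/eqP => e; move: yms; rewrite -e al.
apply: (@leq_trans 2).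
  rewrite ltnS; apply/card_le1_eqP => x y; rewrite !inE /posp.
  move=> /andP [xl /orP [xm | /eqP ex]] /andP [yl /orP [ym | /eqP ey]].
  - by apply: esym; exact: (I1 Ll msL lms xl xm yl ym).
  - by move: p0l; rewrite -ey yl.
  - by move: p0l; rewrite -ex xl.
  - by move: p0l; rewrite -ex xl.
case: (boolP (para l Yb)) => lY.
  have e := para_meet lY al yY.
  apply: (@leq_trans #|[set ys; p1]|); first by rewrite cards2 eq_sym p1y.
  apply: subset_leq_card; apply/subsetP => p; rewrite !inE => /orP [/eqP -> | /eqP ->]; rewrite /negp.
    by rewrite al eqxx orbT.
  by rewrite e p1Y eqxx !orbT.
have [b /andP [bl bB]] : exists b, (b \in l) && (b \in B).
  apply: nonpara_meet; apply/negP => h; move/negP: lY; apply.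
  by apply: (ptrans Ll BL hY).
have yb : ys != b by apply/eqP => e; move: yB; rewrite e bB.
apply: (@leq_trans #|[set ys; b]|); first by rewrite cards2 yb.
apply: subset_leq_card; apply/subsetP => p; rewrite !inE => /orP [/eqP -> | /eqP ->]; rewrite /negp.
  by rewrite al eqxx orbT.
by rewrite bl bB.
Qed.

Lemma pos1 l : l \in L -> para l V -> #|[set q in l | posp q && ~~ Zp q]| <= 1.
Proof.
move=> Ll lV.
have lms : l != ms.
  apply/eqP => e; move/negP: nAV; apply; rewrite e in lV.
  by apply: (ptrans hA msL hV) => //; rewrite para_sym.
apply/card_le1_eqP => x y; rewrite !inE /posp.
move=> /andP [xl /andP [/orP [xm | /eqP ex] nZx]] /andP [yl /andP [/orP [ym | /eqP ey] nZy]].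
- by apply: esym; exact: (I1 Ll msL lms xl xm yl ym).
- have e : l = V by apply: (para_meet lV yl); rewrite ey.
  have := Vms1 (_ : x \in V) xm; rewrite -e => /(_ xl) ex.
  by move: nZx; rewrite ex /Zp eqxx orbT.
- have e : l = V by apply: (para_meet lV xl); rewrite ex.
  have := Vms1 (_ : y \in V) ym; rewrite -e => /(_ yl) ey.
  by move: nZy; rewrite ey /Zp eqxx orbT.
- by rewrite ex ey.
Qed.

Lemma W2 p : ~~ Zp p -> \sum_(q in par p V :\ p) w q <= (r - 2) * k + 1.
Proof.
move=> nZp; have [lL pl lV] := parS p hV.
set l := par p V in lL pl lV *.
have [z [zl Zz]] : exists z, z \in l /\ Zp z.
  case: (eqVneq l V) => e.
    by exists zs; rewrite e zV /Zp eqxx orbT.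
  have [a /andP [al aA]] : exists a, (a \in l) && (a \in A).
    apply: nonpara_meet; apply/negP => h; move/negP: nAV; apply.
    by apply: (ptrans hA lL hV) => //; rewrite para_sym.
  exists a; split => //; rewrite /Zp aA /=; apply/orP; left; apply/eqP => ay.
  by move/eqP: e; apply; apply: (para_meet lV al); rewrite ay.
have zp : z != p by apply/eqP => e; move: nZp; rewrite -e Zz.
have zin : z \in l :\ p by rewrite !inE zp zl.
rewrite (big_setD1 _ zin) /= {1}/w Zz add0n.
apply: (@leq_trans (\sum_(q in l :\ p :\ z) (k + (posp q && ~~ Zp q)))).
  by apply: leq_sum => q _; apply: w_le.
rewrite big_split /= sum_nat_const sum_boolE.
have c : #|l :\ p :\ z| = r - 2.
  have h1 := cardsD1 p l; have h2 := cardsD1 z (l :\ p).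
  rewrite pl (Hsz lL) in h1; rewrite zin in h2.
  exact: ar3 h1 h2.
have c2 : #|[set q in l :\ p :\ z | posp q && ~~ Zp q]| <= 1.
  apply: leq_trans (pos1 lL lV); apply: subset_leq_card; apply/subsetP => q; rewrite !inE.
  by move=> /andP [/and3P [_ _ ql] h]; rewrite ql h.
by rewrite c mulnC leq_add2l.
Qed.

Lemma W3 : \sum_(q in V :\ ys) w q = (r - 2) * k + 1.
Proof.
have zin : zs \in V :\ ys by rewrite !inE zy zV.
rewrite (big_setD1 _ zin) /=.
have -> : w zs = 0 by rewrite /w /Zp eqxx orbT.
have p0in : p0 \in V :\ ys :\ zs by rewrite !inE p0y p0V p0z.
rewrite add0n (big_setD1 _ p0in) /=.
have -> : w p0 = k + 1.
  rewrite /w /Zp /posp /negp (negbTE p0A) (negbTE p0z) eqxx (negbTE p0B) (negbTE p0y) (negbTE p0p1).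
  by rewrite orbT /= subn0.
rewrite (eq_bigr (fun _ => k)); last first.
  move=> q; rewrite !inE => /and4P [qp qz qy qV].
  have qA : q \notin A by apply/negP => h; move/eqP: qy; apply; apply: AV1.
  have qms : q \notin ms by apply/negP => h; move/eqP: qz; apply; apply: Vms1.
  have qB : q \notin B by apply/negP => h; move/eqP: qz; apply; apply: BV1.
  have qp1 : q != p1 by apply/eqP => e; move: p1V; rewrite -e qV.
  rewrite /w /Zp /posp /negp (negbTE qA) (negbTE qz) (negbTE qms) (negbTE qp) (negbTE qB).
  by rewrite (negbTE qy) (negbTE qp1) /= addn0 subn0.
rewrite sum_nat_const; apply: ar4 => //.
have h1 := cardsD1 ys V; have h2 := cardsD1 zs (V :\ ys); have h3 := cardsD1 p0 (V :\ ys :\ zs).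
rewrite yV (Hsz hV) in h1; rewrite zin in h2; rewrite !inE p0z p0y p0V in h3.
exact: ar5 h1 h2 h3.
Qed.

Lemma W4 : \sum_p w p = r * (r - 1) * k.
Proof.
have e1 p : w p + (negp p && ~~ Zp p) = k * ~~ Zp p + (posp p && ~~ Zp p).
  case: (boolP (Zp p)) => zp /=; first by rewrite /w zp !andbF muln0.
  by rewrite !andbT muln1; apply: w_eq.
have : \sum_p w p + \sum_p (negp p && ~~ Zp p) = \sum_p (k * ~~ Zp p) + \sum_p (posp p && ~~ Zp p).
  by rewrite -!big_split; apply: eq_bigr => p _; apply: e1.
rewrite -big_distrr /= !sum_boolT => e; apply: (ar6 hr3 e).
- have -> : [set p | ~~ Zp p] = ~: (zs |: (A :\ ys)).
    by apply/setP => p; rewrite !inE /Zp; case: (p == zs); case: (p != ys); case: (p \in A).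
  have := cardsC (zs |: (A :\ ys)); rewrite cardsU1 card_ord !inE (negbTE zA) andbF /=.
  have := cardsD1 ys A; rewrite yA (Hsz hA) => h; rewrite (ar7 h).
  by move=> h2; apply/eqP; rewrite -(eqn_add2l r) subnKC ?h2 // -h2 leq_addr.
- have -> : [set p | posp p && ~~ Zp p] = p0 |: (ms :\ zs).
    apply/setP => p; rewrite !inE /posp /Zp; case: (eqVneq p p0) => [->|pp0].
      by rewrite (negbTE p0A) (negbTE p0z) orbT.
    rewrite orbF /=; case: (boolP (p \in ms)) => pm /=; last by rewrite andbF.
    by rewrite (negbTE (ms_dA pm)) /= andbT.
  rewrite cardsU1 !inE p0z p0ms /=.
  by have := cardsD1 zs ms; rewrite zms; have [c _ _] := parS zs hA; rewrite (Hsz c) => h; rewrite (ar7 h).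
- have [aB /andP [aBB aBA]] := nonpara_meet nBA.
  have aBz : aB != zs by apply/eqP => e'; move: zA; rewrite -e' aBA.
  have aBy : aB != ys by apply/eqP => e'; move: yB; rewrite -e' aBB.
  have BA1 x : x \in B -> x \in A -> x = aB.
    move=> xb xa; apply: (I1 BL hA _ xb xa aBB aBA).
    by apply/eqP => e'; move: nBA; rewrite e' para_refl.
  have p1z : p1 != zs by apply/eqP => e'; move: p1V; rewrite e' zV.
  have -> : [set p | negp p && ~~ Zp p] = ys |: (p1 |: (B :\ zs :\ aB)).
    apply/setP => p; rewrite !inE /negp /Zp.
    case: (eqVneq p ys) => [->|py]; first by rewrite orbT /= andbF /= eq_sym (negbTE zy).
    case: (eqVneq p p1) => [->|pp1]; first by rewrite !orbT /= (negbTE p1A) (negbTE p1z).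
    rewrite /= !orbF; case: (boolP (p \in B)) => pb /=; last by rewrite !andbF.
    rewrite andbT; case: (eqVneq p zs) => [->|pz] /=; first by rewrite orbT andbF.
    rewrite orbF andbT; case: (boolP (p \in A)) => pa /=.
      by rewrite (BA1 p pb pa) eqxx.
    by apply/esym/eqP => e'; move: pa; rewrite e' aBA.
  rewrite !cardsU1 !inE (eq_sym ys p1) (negbTE p1y) (negbTE yB) (negbTE p1B) !andbF /=.
  have h1 := cardsD1 zs B; have h2 := cardsD1 aB (B :\ zs).
  rewrite zB (Hsz BL) in h1; rewrite !inE aBz aBB in h2.
  have := ar3 h1 h2 => ->; exact: ar9.
Qed.

Lemma w_ys : w ys = k - 1.
Proof.
rewrite /w /Zp /posp /negp yA eqxx /= (negbTE yms) eq_sym (negbTE zy) eq_sym (negbTE p0y) /=.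
by rewrite orbT addn0.
Qed.

Lemma Zp_w p : Zp p -> w p = 0.
Proof. by rewrite /w => ->. Qed.

Lemma nAV' : ~~ para A V. Proof. exact: nAV. Qed.

Lemma graph_exists n : n = r * (r - 1) * k ->
  exists G : rel 'I_n, [/\ simple_graph G, min_degree G = n - ((r - 2) * k + 2)
                         & mc r G <= r * k - 1].
Proof.
move=> Hn.
have [f Hf] := fiber_ex ys (etrans W4 (esym Hn)).
pose G := fun u v : 'I_n => (u != v) && ((f u == f v) || (f v \notin par (f u) V)).
have symV u v : (f v \in par (f u) V) = (f u \in par (f v) V).
  suff H : forall u v, f v \in par (f u) V -> f u \in par (f v) V.
    by apply/idP/idP; apply: H.
  move=> {}u {}v h; have [a b c] := parS (f u) hV.
  have e : par (f u) V = par (f v) V := parU hV a h c.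
  by rewrite -e b.
have deg u : degree G u = (n - 1) - \sum_(q in par (f u) V :\ f u) w q.
  rewrite /degree.
  have -> : [set v | G u v] = [set~ u] :\: [set v | f v \in par (f u) V :\ f u].
    apply/setP => v; rewrite !inE /G eq_sym [f v == f u]eq_sym.
    by case: (v != u); case: (f u == f v); case: (f v \in _).
  rewrite cardsD.
  have -> : [set~ u] :&: [set v | f v \in par (f u) V :\ f u] = [set v | f v \in par (f u) V :\ f u].
    apply/setIidPr/subsetP => v; rewrite !inE => /andP [h _].
    by apply/eqP => e; move: h; rewrite e eqxx.
  by rewrite Hf cardsC1 card_ord subn1.
have wpos u : ~~ Zp (f u).
  apply/negP => Zu; have := Hf [set f u]; rewrite big_set1 (Zp_w Zu) => /eqP.
  rewrite cards_eq0 => /eqP e.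
  have : u \in [set v | f v \in [set f u]] by rewrite !inE.
  by rewrite e inE.
have degge u : n - ((r - 2) * k + 2) <= degree G u.
  by rewrite deg; apply: ar10; apply: W2.
have [u0 fu0] : exists u0, f u0 = ys.
  have := Hf [set ys]; rewrite big_set1 w_ys => h.
  have : 0 < #|[set v | f v \in [set ys]]| by rewrite h; apply: ar12 hr3 hk.
  by case/card_gt0P => u0; rewrite !inE => /eqP; exists u0.
have degu0 : degree G u0 = n - ((r - 2) * k + 2).
  by rewrite deg fu0 (par_on hr Hsz Hpair hV yV) W3 ar11.
pose S' := [set l in L | ys \in l] :\ V.
have cS' : #|S'| <= r.
  have h := cardsD1 V [set l in L | ys \in l].
  rewrite (lines_through_card hr Hsz Hpair) !inE hV yV in h.
  exact: ar13 h.
have [g ginj] := inj_ex cS' (leq_trans (isT : 0 < 3) hr3).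
pose cl u v := if f u == f v then par (f u) A else lineof L (f u) (f v).
have clP u v : [/\ cl u v \in L, f u \in cl u v & f v \in cl u v].
  rewrite /cl; case: (eqVneq (f u) (f v)) => [e|ne].
    by have [a b c] := parS (f u) hA; rewrite -e.
  exact: @lineofP _ L Hpair _ _ ne.
pose c : coloring n r := [ffun e : 'I_n * 'I_n => g (par ys (cl e.1 e.2))].
have hcol : is_edge_coloring G c.
  apply/forallP => x; apply/forallP => y; apply/implyP => _; rewrite !ffunE /=.
  have -> : cl x y = cl y x.
    rewrite /cl eq_sym; case: (eqVneq (f y) (f x)) => [e|ne]; first by rewrite e.
    by rewrite (@lineofC _ L Hpair _ _ ne).
  by [].
have comp i v : #|mono_comp G c i v| <= r * k - 1.
  pose R := odflt V [pick l in S' | g l == i].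
  have RL : R \in L.
    rewrite /R; case: pickP => [l /andP [h _] | _] //=.
    by move: h; rewrite !inE => /andP [_ /andP [-> _]].
  have edge x y : color_rel G c i x y -> par (f x) R = par (f y) R.
    rewrite /color_rel => /andP [Gxy /eqP ci].
    have [lL fxl fyl] := clP x y.
    have nlV : ~~ para (cl x y) V.
      move: Gxy; rewrite /G /cl; case: (eqVneq (f x) (f y)) => [e|ne] /= Gxy.
        apply/negP => h; have [a b c'] := parS (f x) hA.
        move/negP: nAV'; apply.
        by apply: (ptrans hA a hV) => //; rewrite para_sym.
      apply/negP => h; have [l1 l2 l3] := @lineofP _ L Hpair _ _ ne.
      have e := parU hV l1 l2 h.
      by move: Gxy => /andP [_]; rewrite -e l3.
    have [clsL yc clsp] := parS ys lL.
    have clsV : par ys (cl x y) != V.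
      apply/eqP => e; move/negP: nlV; apply.
      by rewrite para_sym -e.
    have clsS : par ys (cl x y) \in S' by rewrite !inE clsL yc clsV.
    have gi : g (par ys (cl x y)) = i by move: ci; rewrite ffunE.
    have RE : R = par ys (cl x y).
      rewrite /R; case: pickP => [l0 /andP [l0S /eqP gl0] | H] /=.
        by apply: ginj => //; rewrite gl0 gi.
      by have := H (par ys (cl x y)); rewrite clsS gi eqxx.
    rewrite RE.
    have h : para (cl x y) (par ys (cl x y)) by rewrite para_sym.
    by rewrite -(parU clsL lL fxl h) -(parU clsL lL fyl h).
  have cl_ : closed (color_rel G c i) [pred u | par (f u) R == par (f v) R].
    by move=> x y /edge e; rewrite !inE /= e.
  apply: (@leq_trans #|[set u | f u \in par (f v) R]|).
    apply: subset_leq_card; apply/subsetP => u; rewrite !inE => h.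
    have := closed_connect cl_ h; rewrite !inE /= eqxx => /esym /eqP e.
    by have [_ b _] := parS (f u) RL; rewrite -e.
  by rewrite Hf; apply: W1; case: (parS (f v) RL).
exists G; split.
- split; last by move=> u; rewrite /G eqxx.
  by move=> u v; rewrite /G eq_sym (eq_sym (f u)) symV.
- apply/eqP; rewrite eqn_leq; apply/andP; split.
    by rewrite /min_degree -degu0; apply: bigmin_le.
  rewrite /min_degree.
  apply: (big_ind (fun x => n - ((r - 2) * k + 2) <= x)) => [|x y hx hy|u _].
  + exact: leq_subr.
  + by rewrite leq_min hx hy.
  + exact: degge.
- rewrite /mc; apply/bigmax_leqP => m hm.
  move/forallP: hm => /(_ c) /implyP /(_ hcol) /existsP [i /existsP [v hv]].
  exact: leq_trans hv (comp i v).
Qed.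

End Constr.

Lemma nat_facts (n r : nat) : (3 <= r)%N ->
  (r * (r - 1) * ((r - 1) * (r - 2) + 1) <= n)%N ->
  (r ^ 2 - r %| n)%N ->
  exists k, [/\ n = (r * (r - 1) * k)%N, (r <= k)%N & (3 <= k)%N].
Proof.
move=> hr hn hd; exists (n %/ (r ^ 2 - r))%N.
have e2 : (r ^ 2 - r = r * (r - 1))%N by rewrite (_ : r ^ 2 = r * r)%N ?expnS ?expn1 //; lia.
have Hn : n = (r * (r - 1) * (n %/ (r ^ 2 - r)))%N by rewrite mulnC -e2 divnK.
split => //.
  move: hn; rewrite {1}Hn leq_pmul2l; first nia.
  by rewrite muln_gt0; apply/andP; split; lia.
move: hn; rewrite {1}Hn leq_pmul2l; first nia.
by rewrite muln_gt0; apply/andP; split; lia.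
Qed.


Set Implicit Arguments. Unset Strict Implicit.
Lemma other1 (T : finType) (A : {set T}) x : (1 < #|A|)%N -> exists y, (y \in A) && (y != x).
Proof.
move=> h; have : (0 < #|A :\ x|)%N by have := cardsD1 x A; case: (x \in A) => /=; lia.
by case/card_gt0P => y; rewrite !inE => /andP [a b]; exists y; rewrite a b.
Qed.

Lemma other2 (T : finType) (A : {set T}) x y : (2 < #|A|)%N ->
  exists z, [&& z \in A, z != x & z != y].
Proof.
move=> h; have : (0 < #|A :\ x :\ y|)%N.
  have := cardsD1 x A; have := cardsD1 y (A :\ x).
  case: (x \in A); case: (y \in A :\ x) => /=; lia.
by case/card_gt0P => z; rewrite !inE => /and3P [a b c]; exists z; rewrite a b c.
Qed.

Lemma other_pair (T : finType) (A : {set T}) x : (2 < #|A|)%N ->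
  exists y1 y2, [/\ y1 \in A, y2 \in A, y1 != x, y2 != x & y1 != y2].
Proof.
move=> h; have [y1 /andP [a b]] := other1 x (ltnW h).
have [y2 /and3P [c d e]] := other2 x y1 h.
by exists y1, y2; rewrite a b c d eq_sym e.
Qed.


Import GRing.Theory Num.Theory.
Local Open Scope ring_scope.

Lemma rat_part (n r k md mcv : nat) : (3 <= r)%N -> (3 <= k)%N -> n = (r * (r - 1) * k)%N ->
  md = (n - ((r - 2) * k + 2))%N -> (mcv <= r * k - 1)%N ->
  md%:R = (1 - (r%:R - 2) / (r%:R ^+ 2 - r%:R)) * n%:R - 2 :> rat /\
  mcv%:R < n%:R / (r%:R - 1) :> rat.
Proof.
move=> hr3 hk3 Hn -> mcb; split.
- have le : ((r - 2) * k + 2 <= n)%N by rewrite Hn; nia.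
  rewrite natrB // natrD Hn !natrM !natrB //; try by lia.
  have hx : (r%:R : rat) ^+ 2 - r%:R != 0.
    rewrite subr_eq0 -natrX eqr_nat (_ : r ^ 2 = r * r)%N ?expnS ?expn1 //; apply/eqP; nia.
  by field.
- have e : n%:R / (r%:R - 1) = (r * k)%:R :> rat.
    have h1 : (r%:R : rat) - 1 != 0 by rewrite subr_eq0 pnatr_eq1; apply/eqP; lia.
    rewrite Hn !natrM natrB; try by lia.
    by field.
  rewrite e ltr_nat; apply: (leq_ltn_trans mcb); rewrite subn1 ltn_predL muln_gt0; apply/andP; split; lia.
Qed.


Unset Implicit Arguments. Set Strict Implicit.
Theorem theorem1p3 (n r : nat) :
  (3 <= r)%N ->
  (r * (r - 1) * ((r - 1) * (r - 2) + 1) <= n)%N ->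
  (r ^ 2 - r %| n)%N ->
  affine_plane_exists r ->
  exists G : rel 'I_n,
    [/\ simple_graph G,
        (min_degree G)%:R = (1 - (r%:R - 2) / (r%:R ^+ 2 - r%:R)) * n%:R - 2 :> rat
      & (mc r G)%:R < n%:R / (r%:R - 1) :> rat].
Proof.
move=> hr3 hn hd [L [_ Hsz Hpair]].
have [k [Hn hk hk3]] := @nat_facts n r hr3 hn hd.
have hr : (2 <= r)%N by lia.
have r2pos : (0 < r ^ 2)%N by rewrite expn_gt0; lia.
pose ys : 'I_(r ^ 2) := Ordinal r2pos.
pose S := [set l in L | ys \in l].
have cS : #|S| = r.+1 := lines_through_card hr Hsz Hpair ys.
have h3 : (2 < #|S|)%N by rewrite cS ltnS; exact: ltnW.
have [A AS] : exists A, A \in S by apply/card_gt0P; exact: leq_trans h3.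
have [V /andP [VS VA]] := other1 A (ltnW h3).
have [Yb /and3P [YS YA YV]] := other2 A V h3.
move: AS VS YS; rewrite !inE => /andP [hA yA] /andP [hV yV] /andP [hY yY].
have AV : A != V by rewrite eq_sym.
have AY : A != Yb by rewrite eq_sym.
have VY : V != Yb by rewrite eq_sym.
have hV1 : (1 < #|V|)%N by rewrite (Hsz V hV).
have [zs /andP [zV zy]] := other1 ys hV1.
have [msL zms msA] := par_spec hr Hsz Hpair zs hA.
have zA : zs \notin A.
  apply/negP => h; move/eqP: zy; apply.
  exact: (inter1 Hpair hA hV AV h zV yA yV).
have yms : ys \notin par L zs A.
  apply/negP => h; have e := para_meet msA h yA.
  by move: zA; rewrite -e zms.
have [p1 [p1Y p1y p1m]] : exists p1, [/\ p1 \in Yb, p1 != ys & p1 \notin par L zs A].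
  have hY2 : (2 < #|Yb|)%N by rewrite (Hsz Yb hY).
  have [x1 [x2 [x1Y x2Y x1y x2y x12]]] := other_pair ys hY2.
  case: (boolP (x1 \in par L zs A)) => x1m; last by exists x1.
  case: (boolP (x2 \in par L zs A)) => x2m; last by exists x2.
  have Yms : Yb != par L zs A by apply/eqP => e; move: yms; rewrite -e yY.
  by move/eqP: x12; case; apply: (inter1 Hpair hY msL Yms x1Y x1m x2Y x2m).
have [M1L p1M M1A] := par_spec hr Hsz Hpair p1 hA.
have [p0 /andP [p0M p0V]] : exists p0, (p0 \in par L p1 A) && (p0 \in V).
  apply: nonpara_meet; apply/negP => h; move/negP: (nonpara_share AV yA yV); apply.
  by apply: (para_trans hr Hsz Hpair hA M1L hV) => //; rewrite para_sym.
have [G [sg md mcb]] := graph_exists hr3 Hsz Hpair hk hA hV hY yA yV yY AV AY VY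
   zV zy p1Y p1y p1m p0V p0M Hn.
have [e1 e2] := @rat_part n r k (min_degree G) (mc r G) hr3 hk3 Hn md mcb.
by exists G; split.
Qed.
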